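(* Let $n\ge1$, $0<q<\infty$ and $\pi\sim\mu_{n,q}$. Then $\mathrm{Var}(\mathrm{LIS}(\pi))\le n-1$. Furthermore, for all $t>0$, $$\mathbb{P}\big(|\mathrm{LIS}(\pi)-\mathbb{E}(\mathrm{LIS}(\pi))|>t\sqrt{n-1}\big)<2e^{-t^2/2}.$$
   Context: For $q>0$ and an integer $n\ge1$, the Mallows measure $\mu_{n,q}$ on $S_n$ is $\mu_{n,q}(\pi)=q^{\mathrm{inv}(\pi)}/Z_{n,q}$, where $\mathrm{inv}(\pi)$ is the number of pairs $i<j$ with $\pi(i)>\pi(j)$ and $Z_{n,q}$ is the normalizing constant. $\mathrm{LIS}(\pi)$ denotes the length of a longest increasing subsequence of $\pi$. *)

(* Defs.v *)
From HB Require Import structures.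
From mathcomp Require Import all_boot all_order all_algebra all_fingroup.
From mathcomp Require Import reals.
From mathcomp Require Import sequences exp.
Set Implicit Arguments. Unset Strict Implicit. Unset Printing Implicit Defensive.
Import Order.TTheory GRing.Theory Num.Theory.
Local Open Scope ring_scope.

Definition inv_perm (n : nat) (s : 'S_n) : nat :=
  #|[set p : 'I_n * 'I_n | (p.1 < p.2)%N && (s p.2 < s p.1)%N]|.

Definition increasing_on (n : nat) (s : 'S_n) (A : {set 'I_n}) : bool :=
  [forall i in A, forall j in A, (i < j)%N ==> (s i < s j)%N].

Definition LIS (n : nat) (s : 'S_n) : nat :=
  \max_(A : {set 'I_n} | increasing_on s A) #|A|.

Definition mallowsZ (R : realType) (n : nat) (q : R) : R :=
  \sum_(s : 'S_n) q ^+ inv_perm s.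
Definition mallows (R : realType) (n : nat) (q : R) (s : 'S_n) : R :=
  q ^+ inv_perm s / mallowsZ n q.

Definition mallows_E (R : realType) (n : nat) (q : R) (X : 'S_n -> R) : R :=
  \sum_(s : 'S_n) mallows q s * X s.
Definition mallows_P (R : realType) (n : nat) (q : R) (E : pred 'S_n) : R :=
  \sum_(s : 'S_n | E s) mallows q s.
Definition mallows_Var (R : realType) (n : nat) (q : R) (X : 'S_n -> R) : R :=
  mallows_E q (fun s => (X s - mallows_E q X) ^+ 2).

Definition LISR (R : realType) (n : nat) (s : 'S_n) : R := (LIS s)%:R.

(* Main.v *)
Require Import Defs.
From HB Require Import structures.
From mathcomp Require Import all_boot all_order all_algebra all_fingroup.
From mathcomp Require Import reals.
From mathcomp Require Import sequences exp.
From mathcomp Require Import zify ring lra.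
Import Order.TTheory GRing.Theory Num.Theory.
Local Open Scope ring_scope.
Set Implicit Arguments. Unset Strict Implicit. Unset Printing Implicit Defensive.

Definition build n (a : 'I_n.+1) (s : 'S_n) : 'S_n.+1 := lift_perm ord0 a s.

Lemma sum_perm_S (V : nmodType) n (F : 'S_n.+1 -> V) :
  \sum_(s : 'S_n.+1) F s = \sum_(a : 'I_n.+1) \sum_(s : 'S_n) F (build a s).
Proof.
rewrite (partition_big (fun s : 'S_n.+1 => s ord0) predT) //=.
apply: eq_bigr => j0 _.
rewrite (reindex (build j0)); last first.
  pose ulsf i (s : 'S_n.+1) k := odflt k (unlift (s i) (s (lift i k))).
  have ulsfK i (s : 'S_n.+1) k: lift (s i) (ulsf i s k) = s (lift i k).
    rewrite /ulsf; have:= neq_lift i k.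
    by rewrite -(can_eq (permK s)) => /unlift_some[] ? ? ->.
  have inj_ulsf: injective (ulsf ord0 _).
    move=> s; apply: can_inj (ulsf (s ord0) s^-1%g) _ => k'.
    by rewrite {1}/ulsf ulsfK !permK liftK.
  exists (fun s => perm (inj_ulsf s)) => [s _ | s].
    by apply/permP=> k'; rewrite permE /ulsf /build lift_perm_lift lift_perm_id liftK.
  move/(s _ =P _) => si0; apply/permP=> k.
  case: (unliftP ord0 k) => [k'|] ->; rewrite /build ?lift_perm_id //.
  by rewrite lift_perm_lift -si0 permE ulsfK.
by apply: eq_bigl => s; rewrite /build lift_perm_id eqxx.
Qed.

Lemma lift_ltn n (a : 'I_n.+1) (x y : 'I_n) : (lift a x < lift a y)%N = (x < y)%N.
Proof. rewrite /= /bump; case: leqP; case: leqP => /=; lia. Qed.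

Lemma lift_ltn_a n (a : 'I_n.+1) (x : 'I_n) : (lift a x < a)%N = (x < a)%N.
Proof. rewrite /= /bump; case: leqP => /=; lia. Qed.

Lemma sum_lt_a n a : (a <= n)%N -> (\sum_(v < n) (v < a)%N)%N = a.
Proof.
elim: n a => [|n IH] a ha; first by rewrite big_ord0; lia.
rewrite big_ord_recr /=.
case: (ltnP n a) => h.
  have -> : a = n.+1 by lia.
  have -> : (\sum_(v < n) (v < n.+1)%N)%N = (\sum_(v < n) (v < n)%N)%N.
    by apply: eq_bigr => v _; rewrite ltn_ord; have := ltn_ord v; lia.
  by rewrite IH // addn1.
by rewrite IH // addn0.
Qed.

Lemma inv_perm_sum n (s : 'S_n) :
  inv_perm s = (\sum_(i : 'I_n) \sum_(j : 'I_n) ((i < j)%N && (s j < s i)%N))%N.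
Proof.
rewrite /inv_perm -sum1_card pair_big /= big_mkcond /=.
by apply: eq_bigr => p _; rewrite inE; case: ifP.
Qed.

Lemma inv_build n (a : 'I_n.+1) (s : 'S_n) : inv_perm (build a s) = (a + inv_perm s)%N.
Proof.
rewrite !inv_perm_sum big_ord_recl big_ord_recl /= add0n.
congr (_ + _)%N.
  rewrite /build lift_perm_id.
  under eq_bigr do rewrite lift_perm_lift lift_ltn_a.
  rewrite (reindex_inj (@perm_inj _ s^-1)) /=.
  under eq_bigr do rewrite permKV.
  by rewrite sum_lt_a // -ltnS.
apply: eq_bigr => i _; rewrite big_ord_recl /= /build.
rewrite add0n; apply: eq_bigr => j _.
by rewrite !lift_perm_lift lift_ltn ltnS.
Qed.
Section LISlemma.
Variables (n i : nat) (p1 p2 : 'S_n).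
Hypothesis H1 : forall j : 'I_n, (j < i)%N -> p1 j = p2 j.
Hypothesis H2 : forall j k : 'I_n, (i < j)%N -> (i < k)%N -> (p1 j < p1 k)%N = (p2 j < p2 k)%N.

Definition cnt (p : 'S_n) (c : nat) := #|[set k : 'I_n | (i <= k)%N && (p k < c)%N]|.

Lemma cnt_eq c : cnt p1 c = cnt p2 c.
Proof.
have E (p : 'S_n) : #|[set v : 'I_n | (v < c)%N]| =
   (#|[set k : 'I_n | (p k < c)%N] :&: [set k : 'I_n | (k < i)%N]| + cnt p c)%N.
  rewrite -(card_preimset _ (@perm_inj _ p)).
  rewrite -(cardsID [set k : 'I_n | (k < i)%N] (p @^-1: [set v : 'I_n | (v < c)%N])).
  rewrite /cnt; congr (_ + _)%N; apply: eq_card => k; rewrite !inE //.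
  by rewrite -leqNgt.
have := E p1; rewrite (E p2).
have -> : [set k : 'I_n | (p1 k < c)%N] :&: [set k : 'I_n | (k < i)%N] =
          [set k : 'I_n | (p2 k < c)%N] :&: [set k : 'I_n | (k < i)%N].
  apply/setP => k; rewrite !inE; case: (ltnP k i) => h; last by rewrite !andbF.
  by rewrite H1.
by move/addnI.
Qed.

Lemma cnt_strict (p : 'S_n) (k0 : 'I_n) (v : nat) :
  (i <= k0)%N -> (p k0 < v)%N -> ((cnt p (p k0)).+1 <= cnt p v)%N.
Proof.
move=> hk hv; rewrite /cnt.
have : k0 \notin [set k : 'I_n | (i <= k)%N && (p k < p k0)%N] by rewrite inE ltnn andbF.
move/negbTE => h.
have := cardsU1 k0 [set k : 'I_n | (i <= k)%N && (p k < p k0)%N]; rewrite h /= add1n => <-.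
apply: subset_leq_card; apply/subsetP => k; rewrite !inE => /orP [/eqP -> | /andP [-> h2]].
  by rewrite hk hv.
by rewrite (ltn_trans h2 hv).
Qed.

Lemma key (e y : 'I_n) : (i <= e)%N -> (i < y)%N -> (p1 e < p1 y)%N -> (p1 e <= p2 y)%N.
Proof.
move=> he hy hey; rewrite leqNgt; apply/negP => hlt.
have c1 := cnt_strict (v := p1 e) (ltnW hy) hlt.
rewrite -[cnt p2 (p1 e)]cnt_eq in c1.
have c2 := cnt_strict he hey.
have c3 : (cnt p1 (p1 y) <= (cnt p2 (p2 y)).+1)%N.
  pose T (p : 'S_n) := [set k : 'I_n | (i < k)%N && (p k < p y)%N].
  have T12 : T p1 = T p2.
    by apply/setP => k; rewrite !inE; case: (ltnP i k) => h //=; rewrite H2.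
  have s1 : (cnt p1 (p1 y) <= #|[set k : 'I_n | val k == i]| + #|T p1|)%N.
    apply: leq_trans (leq_card_setU _ _); apply: subset_leq_card; apply/subsetP => k.
    rewrite !inE => /andP [h1 h2]; rewrite h2 andbT.
    by rewrite leq_eqVlt in h1; case/orP: h1 => [/eqP ->|->]; rewrite ?eqxx ?orbT.
  have s2 : (#|[set k : 'I_n | val k == i]| <= 1)%N.
    apply/card_le1_eqP => x z; rewrite !inE => /eqP hx /eqP hz.
    by apply: val_inj; rewrite hx hz.
  have s3 : (#|T p2| <= cnt p2 (p2 y))%N.
    apply: subset_leq_card; apply/subsetP => k; rewrite !inE => /andP [h1 ->].
    by rewrite ltnW.
  rewrite T12 in s1; lia.
lia.
Qed.

Lemma LIS_ge (p : 'S_n) (A : {set 'I_n}) : increasing_on p A -> (#|A| <= LIS p)%N.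
Proof. by move=> h; rewrite /LIS; exact: (@leq_bigmax_cond _ (increasing_on p) (fun B : {set 'I_n} => #|B|) A h). Qed.

Lemma LIS_ex (p : 'S_n) : exists2 A, increasing_on p A & LIS p = #|A|.
Proof.
have h0 : (0 < #|[pred B : {set 'I_n} | increasing_on p B]|)%N.
  apply/card_gt0P; exists set0; rewrite inE.
  by apply/forallP => x; apply/implyP; rewrite inE.
have [A HA E] := eq_bigmax_cond (fun B : {set 'I_n} => #|B|) h0.
by exists A; [move: HA; rewrite inE | rewrite -E].
Qed.

Lemma LIS_lip : (LIS p1 <= (LIS p2).+1)%N.
Proof.
have [A incA ->] := LIS_ex p1.
have HA : forall x y, x \in A -> y \in A -> (x < y)%N -> (p1 x < p1 y)%N.
  move=> x y xA yA xy.
  by move/forallP: incA => /(_ x); rewrite xA /= => /forallP /(_ y); rewrite yA xy.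
pose B := [set e in A | (e < i)%N || [exists e', (e' \in A) && (i <= e')%N && (e' < e)%N]].
have BA : B \subset A by apply/subsetP => x; rewrite inE => /andP [].
have cB : (#|A| <= #|B|.+1)%N.
  rewrite -(cardsID B A).
  have -> : A :&: B = B by apply/setIidPr.
  have : (#|A :\: B| <= 1)%N.
    apply/card_le1_eqP => x z; rewrite !inE.
    move=> /andP [hx xA] /andP [hz zA].
    move: hx hz; rewrite xA zA /= !negb_or -!leqNgt.
    case/andP => ix /existsPn nx; case/andP => iz /existsPn nz.
    apply: val_inj; case: (ltngtP x z) => // h.
      by have := nz x; rewrite xA ix h.
    by have := nx z; rewrite zA iz h.
  lia.
suff incB : increasing_on p2 B by have := LIS_ge incB; lia.
apply/forallP => x; apply/implyP => xB; apply/forallP => y; apply/implyP => yB.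
apply/implyP => xy.
move: (xB) (yB); rewrite !inE => /andP [xA hx] /andP [yA hy].
case: (ltnP y i) => yi.
  have xi : (x < i)%N by apply: ltn_trans xy yi.
  by rewrite -!H1 //; apply: HA.
case: (ltnP x i) => xi.
  move: hy; rewrite ltnNge yi /= => /existsP [e /andP [/andP [eA ie] ey]].
  rewrite -H1 //.
  have hxe : (p1 x < p1 e)%N by apply: HA => //; apply: (leq_trans xi ie).
  have hey : (p1 e < p1 y)%N by apply: HA.
  have iy : (i < y)%N by apply: (leq_ltn_trans ie ey).
  exact: (leq_trans hxe (key ie iy hey)).
move: hx; rewrite ltnNge xi /= => /existsP [e /andP [/andP [eA ie] ex]].
have ix : (i < x)%N by apply: (leq_ltn_trans ie ex).
by rewrite -H2 //; [apply: HA | apply: ltn_trans ix xy].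
Qed.
End LISlemma.



Lemma LIS_le n (p : 'S_n) : (LIS p <= n)%N.
Proof. have [A _ ->] := LIS_ex p; by rewrite -[n in (_ <= n)%N]card_ord max_card. Qed.

Lemma LIS_ge1 n (p : 'S_n) : (0 < n)%N -> (1 <= LIS p)%N.
Proof.
case: n p => // n p _.
have : increasing_on p [set ord0].
  apply/forallP => x; apply/implyP; rewrite inE => /eqP ->.
  apply/forallP => y; apply/implyP; rewrite inE => /eqP ->.
  by rewrite ltnn.
by move/LIS_ge; rewrite cards1.
Qed.

Section Analysis.
Variables (R : realType) (q : R).
Hypothesis hq : 0 < q.

Definition Cprop n (f : 'S_n -> R) := forall (i : nat) (p1 p2 : 'S_n),
  (forall j : 'I_n, (j < i)%N -> p1 j = p2 j) ->
  (forall j k : 'I_n, (i < j)%N -> (i < k)%N -> (p1 j < p1 k)%N = (p2 j < p2 k)%N) ->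
  `|f p1 - f p2| <= 1.

Lemma LISR_C n : Cprop (@LISR R n).
Proof.
move=> i p1 p2 h1 h2.
have l1 := LIS_lip h1 h2.
have l2 : (LIS p2 <= (LIS p1).+1)%N.
  apply: (LIS_lip (i := i)) => [j hj|j k hj hk]; [by rewrite h1 | by rewrite h2].
have r1 : (LIS p1)%:R <= (LIS p2)%:R + 1 :> R by move: l1; rewrite -(ler_nat R) -addn1 natrD.
have r2 : (LIS p2)%:R <= (LIS p1)%:R + 1 :> R by move: l2; rewrite -(ler_nat R) -addn1 natrD.
rewrite /LISR ler_norml; apply/andP; split; lra.
Qed.

Lemma C_build n (f : 'S_n.+1 -> R) (a : 'I_n.+1) :
  Cprop f -> Cprop (fun s => f (build a s)).
Proof.
move=> hf i s1 s2 h1 h2; apply: (hf i.+1).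
  move=> j; case: (unliftP ord0 j) => [j'|] -> /=; rewrite /build.
    by rewrite !lift_perm_lift => hj; rewrite h1.
  by rewrite !lift_perm_id.
move=> j k; case: (unliftP ord0 j) => [j'|] -> //=; case: (unliftP ord0 k) => [k'|] -> //=.
rewrite /build !lift_perm_lift !lift_ltn => hj hk; rewrite h2 //.
Qed.

Lemma C_first n (f : 'S_n.+1 -> R) (a b : 'I_n.+1) (s : 'S_n) :
  Cprop f -> `|f (build a s) - f (build b s)| <= 1.
Proof.
move=> hf; apply: (hf 0%N) => //.
move=> j k; case: (unliftP ord0 j) => [j'|] -> //=; case: (unliftP ord0 k) => [k'|] -> //=.
by rewrite /build !lift_perm_lift !lift_ltn.
Qed.

End Analysis.



Section Mal.
Variables (R : realType) (q : R).
Hypothesis hq : 0 < q.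

Lemma sum_gt0 (I : finType) (i0 : I) (F : I -> R) :
  (forall i, 0 < F i) -> 0 < \sum_i F i.
Proof.
move=> hF; rewrite (bigD1 i0) //=.
have := @sumr_ge0 R _ (index_enum I) (fun i => i != i0) F (fun i _ => ltW (hF i)).
have := hF i0; lra.
Qed.

Lemma Z_gt0 n : 0 < mallowsZ n q.
Proof. by apply: (sum_gt0 1%g) => s; rewrite exprn_gt0. Qed.

Lemma m_gt0 n (s : 'S_n) : 0 < mallows q s.
Proof. by rewrite /mallows divr_gt0 ?exprn_gt0 ?Z_gt0. Qed.

Lemma m_sum n : \sum_(s : 'S_n) mallows q s = 1.
Proof.
rewrite /mallows -mulr_suml -/(mallowsZ n q) divff //.
by have := Z_gt0 n; rewrite lt0r => /andP [].
Qed.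

Notation E := (mallows_E q).

Lemma E_const n (c : R) : E (fun _ : 'S_n => c) = c.
Proof. by rewrite /mallows_E -mulr_suml m_sum mul1r. Qed.

Lemma E_add n (X Y : 'S_n -> R) : E (fun s => X s + Y s) = E X + E Y.
Proof. by rewrite /mallows_E -big_split /=; apply: eq_bigr => s _; rewrite mulrDr. Qed.

Lemma E_scale n (c : R) (X : 'S_n -> R) : E (fun s => c * X s) = c * E X.
Proof. by rewrite /mallows_E mulr_sumr; apply: eq_bigr => s _; rewrite mulrCA. Qed.

Lemma E_le n (X Y : 'S_n -> R) : (forall s, X s <= Y s) -> E X <= E Y.
Proof.
move=> h; rewrite /mallows_E; apply: ler_sum => s _.
by rewrite ler_wpM2l // ltW // m_gt0.
Qed.

Lemma E_ext n (X Y : 'S_n -> R) : (forall s, X s = Y s) -> E X = E Y.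
Proof. by move=> h; rewrite /mallows_E; apply: eq_bigr => s _; rewrite h. Qed.

Definition wS n := \sum_(a : 'I_n.+1) q ^+ a.

Lemma wS_gt0 n : 0 < wS n.
Proof. by apply: (sum_gt0 ord0) => a; rewrite exprn_gt0. Qed.

Lemma Z_S n : mallowsZ n.+1 q = wS n * mallowsZ n q.
Proof.
rewrite /mallowsZ sum_perm_S /wS mulr_suml; apply: eq_bigr => a _.
rewrite mulr_sumr; apply: eq_bigr => s _.
by rewrite inv_build exprD.
Qed.

Lemma E_S n (X : 'S_n.+1 -> R) :
  E X = \sum_(a : 'I_n.+1) (q ^+ a / wS n) * E (fun s => X (build a s)).
Proof.
rewrite /mallows_E sum_perm_S; apply: eq_bigr => a _.
rewrite mulr_sumr; apply: eq_bigr => s _.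
rewrite /mallows inv_build Z_S exprD.
have h1 := wS_gt0 n; have h2 := Z_gt0 n.
field; apply/andP; split; rewrite gt_eqF //.
Qed.

Lemma w_sum n : \sum_(a : 'I_n.+1) (q ^+ a / wS n) = 1.
Proof. by rewrite -mulr_suml divff // gt_eqF // wS_gt0. Qed.

Lemma w_gt0 n (a : 'I_n.+1) : 0 < q ^+ a / wS n.
Proof. by rewrite divr_gt0 ?exprn_gt0 ?wS_gt0. Qed.

End Mal.



Section Core.
Variables (R : realType).

Lemma exp_quad (u : R) : `|u| <= 1 -> expR u <= 1 + u + 2 * u ^+ 2.
Proof.
move=> hu; have [u1 u2] : -1 <= u /\ u <= 1 by move: hu; rewrite ler_norml => /andP [].
pose v := - u.
have hP : 0 < 1 - v + 2 * v ^+ 2 by rewrite /v; nra.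
have he : expR u * expR v = 1 by rewrite /v expRxMexpNx_1.
have eu := expR_gt0 u; have ev := expR_gt0 v.
have key : 1 <= expR v * (1 - v + 2 * v ^+ 2).
  case: (lerP 0 v) => hv.
    have := expR_ge1Dx v => h.
    have : (1 + v) * (1 - v + 2 * v ^+ 2) <= expR v * (1 - v + 2 * v ^+ 2).
      by rewrite ler_wpM2r // ltW.
    nra.
  have h2 : expR v = expR (v / 2) ^+ 2.
    by rewrite expr2 -expRD; congr expR; field.
  have h3 : 1 + v / 2 <= expR (v / 2) := expR_ge1Dx _.
  have h4 : 0 <= 1 + v / 2 by rewrite /v; lra.
  have h5 : (1 + v / 2) ^+ 2 <= expR v.
    by rewrite h2 lerXn2r // ?nnegrE // (le_trans h4 h3).
  have : (1 + v / 2) ^+ 2 * (1 - v + 2 * v ^+ 2) <= expR v * (1 - v + 2 * v ^+ 2).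
    by rewrite ler_wpM2r // ltW.
  have h6 : 0 <= v ^+ 2 * ((v + 1) * (v + 5 / 2)).
    by apply: mulr_ge0; [exact: sqr_ge0 | apply: mulr_ge0; rewrite /v; lra].
  nra.
have : expR u * 1 <= expR u * (expR v * (1 - v + 2 * v ^+ 2)).
  by rewrite ler_wpM2l // ltW.
rewrite mulrA he mul1r mulr1 /v; nra.
Qed.

Lemma wlin (I : finType) (w F : I -> R) (c d : R) : \sum_i w i = 1 ->
  \sum_i w i * (c * F i + d) = c * \sum_i w i * F i + d.
Proof.
move=> hw.
have -> : \sum_i w i * (c * F i + d) = \sum_i (c * (w i * F i) + d * w i).
  by apply: eq_bigr => i _; ring.
by rewrite big_split /= -!mulr_sumr hw mulr1.
Qed.

Lemma argmin_ex (n : nat) (g : 'I_n.+1 -> R) : exists a0, forall a, g a0 <= g a.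
Proof.
case: (@arg_minP _ _ _ ord0 predT g) => // a0 _ h.
by exists a0 => a; apply: h.
Qed.

End Core.



Section Main.
Variables (R : realType) (q : R).
Hypothesis hq : 0 < q.
Notation E := (mallows_E q).

Lemma perm_triv n (h : (n <= 1)%N) (s t : 'S_n) : s = t.
Proof.
apply/permP => x; apply: ord_inj.
have := ltn_ord (s x); have := ltn_ord (t x); lia.
Qed.

Lemma E_triv n (h : (n <= 1)%N) (X : 'S_n -> R) (s : 'S_n) : E X = X s.
Proof.
rewrite (E_ext q (Y := fun _ => X s)) ?E_const // => t.
by rewrite (perm_triv h t s).
Qed.

Lemma E_sub n (X Y : 'S_n -> R) : E (fun s => X s - Y s) = E X - E Y.
Proof.
rewrite (@E_ext _ q n _ (fun s => X s + (-1) * Y s)); last by move=> s; ring.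
by rewrite E_add // E_scale //; ring.
Qed.

Lemma E_ge0 n (X : 'S_n -> R) : (forall s, 0 <= X s) -> 0 <= E X.
Proof.
move=> h; have := E_le hq (X := fun _ => 0) (Y := X) h.
by rewrite (E_const hq).
Qed.

Definition Concl n (f : 'S_n -> R) :=
  mallows_Var q f <= (n.-1)%:R /\
  forall lam, `|lam| <= 1 ->
    E (fun s => expR (lam * (f s - E f))) <= expR ((n.-1)%:R * lam ^+ 2 / 2).

Lemma base n (h : (n <= 1)%N) (f : 'S_n -> R) : Concl f.
Proof.
have hn : n.-1 = 0%N by lia.
case: (n =P 0%N) => [n0|n0].
  subst n.
  have Ef : E f = f 1%g by apply: E_triv.
  split.
    rewrite /mallows_Var (E_ext q (Y := fun _ => 0)) ?E_const // => s.
    by rewrite Ef (perm_triv h s 1%g) subrr expr0n.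
  move=> lam _; rewrite (E_ext q (Y := fun _ => 1)) ?E_const //= ?mul0r ?expR0 // => s.
  by rewrite Ef (perm_triv h s 1%g) subrr mulr0 expR0.
have Ef : E f = f 1%g by apply: E_triv.
split.
  rewrite /mallows_Var (E_ext q (Y := fun _ => 0)) ?E_const // ?hn // => s.
  by rewrite Ef (perm_triv h s 1%g) subrr expr0n.
move=> lam _; rewrite hn (E_ext q (Y := fun _ => 1)) ?E_const //= ?mul0r ?expR0 // => s.
by rewrite Ef (perm_triv h s 1%g) subrr mulr0 expR0.
Qed.


Lemma step n (hn : (0 < n)%N) (IH : forall f : 'S_n -> R, Cprop f -> Concl f)
  (f : 'S_n.+1 -> R) : Cprop f -> Concl f.
Proof.
move=> hf.
pose w (a : 'I_n.+1) := q ^+ a / wS q n.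
pose fa (a : 'I_n.+1) := fun s : 'S_n => f (build a s).
pose g a := E (fa a).
pose mu := E f.
have hw : \sum_a w a = 1 by apply: w_sum.
have wpos a : 0 <= w a by apply: ltW; apply: w_gt0.
have Emu : mu = \sum_a w a * g a by rewrite /mu (E_S hq).
have IHa a := IH _ (C_build a hf).
have G1 a b : `|g a - g b| <= 1.
  rewrite /g -E_sub ler_norml.
  have h s : `|fa a s - fa b s| <= 1 by apply: C_first.
  apply/andP; split.
    rewrite -[-1](E_const hq n); apply: (E_le hq) => s.
    by have := h s; rewrite ler_norml => /andP [].
  rewrite -[1](E_const hq n); apply: (E_le hq) => s.
  by have := h s; rewrite ler_norml => /andP [].
have G2 a : `|g a - mu| <= 1.
  have -> : g a - mu = \sum_b w b * (-1 * g b + g a).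
    by rewrite wlin // Emu; ring.
  apply: le_trans (ler_norm_sum _ _ _) _.
  apply: (@le_trans _ _ (\sum_b w b)); last by rewrite hw.
  apply: ler_sum => b _.
  rewrite normrM ger0_norm //.
  rewrite -[X in _ <= X]mulr1; apply: ler_wpM2l => //.
  by rewrite (_ : -1 * g b + g a = g a - g b) ?G1 //; ring.
have G0 : \sum_a w a * (g a - mu) = 0.
  have -> : \sum_a w a * (g a - mu) = \sum_a w a * (1 * g a + - mu).
    by apply: eq_bigr => a _; congr (_ * _); ring.
  by rewrite wlin // -Emu; ring.
have G3 : \sum_a w a * (g a - mu) ^+ 2 <= 1 / 4.
  have [a0 ha0] := argmin_ex g.
  pose Z a := g a - g a0.
  pose m := \sum_a w a * Z a.
  have Zb a : 0 <= Z a <= 1.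
    apply/andP; split; first by rewrite subr_ge0.
    by have := G1 a a0; rewrite ler_norml => /andP [].
  have hm : m = mu - g a0.
    rewrite /m (_ : \sum_a w a * Z a = \sum_a w a * (1 * g a + - g a0)).
      by rewrite wlin // -Emu; ring.
    by apply: eq_bigr => a _; rewrite /Z; congr (_ * _); ring.
  apply: (@le_trans _ _ (\sum_a w a * ((1 - 2 * m) * Z a + m ^+ 2))).
    apply: ler_sum => a _; apply: ler_wpM2l => //.
    have := Zb a; move=> /andP [z0 z1].
    have -> : g a - mu = Z a - m by rewrite hm /Z; ring.
    nra.
  rewrite wlin // -/m; have := sqr_ge0 (m - 1 / 2); nra.
split.
  rewrite /mallows_Var -/mu (E_S hq) /=.
  apply: (@le_trans _ _ (\sum_a w a * ((n.-1)%:R + 1))).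
    apply: ler_sum => a _; apply: ler_wpM2l; first exact: wpos.
    have -> : E (fun s => (f (build a s) - mu) ^+ 2) =
              mallows_Var q (fa a) + (g a - mu) ^+ 2.
      rewrite /mallows_Var -/(g a).
      rewrite (E_ext q (Y := fun s => (fa a s - g a) ^+ 2 +
                 ((2 * (g a - mu)) * fa a s + (mu ^+ 2 - g a ^+ 2)))); last first.
        by move=> s; rewrite /fa; ring.
      rewrite E_add E_add E_scale (E_const hq) -/(g a); ring.
    apply: lerD; first by case: (IHa a).
    have := G2 a; rewrite ler_norml => /andP [h1 h2]; nra.
  rewrite -mulr_suml hw mul1r natr1 prednK //.
move=> lam hlam.
rewrite -/mu (E_S hq) /=.
pose B := expR ((n.-1)%:R * lam ^+ 2 / 2).
apply: (@le_trans _ _ (\sum_a w a * (B * (1 + lam * (g a - mu) + 2 * (lam * (g a - mu)) ^+ 2)))).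
  apply: ler_sum => a _; apply: ler_wpM2l; first exact: wpos.
  rewrite (E_ext q (Y := fun s => expR (lam * (g a - mu)) * expR (lam * (fa a s - g a)))); last first.
    by move=> s; rewrite -expRD /fa; congr expR; ring.
  rewrite E_scale mulrC; apply: ler_pM.
  - by apply: E_ge0 => s; apply: ltW; apply: expR_gt0.
  - by apply: ltW; apply: expR_gt0.
  - by case: (IHa a) => _ /(_ lam hlam).
  apply: exp_quad; rewrite normrM.
  have := G2 a; have := normr_ge0 lam; have := normr_ge0 (g a - mu); nra.
have -> : \sum_a w a * (B * (1 + lam * (g a - mu) + 2 * (lam * (g a - mu)) ^+ 2)) =
   B * (\sum_a w a + lam * \sum_a w a * (g a - mu) + (2 * lam ^+ 2) * \sum_a w a * (g a - mu) ^+ 2).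
  rewrite !mulr_sumr -!big_split /= mulr_sumr; apply: eq_bigr => a _ /=; ring.
rewrite hw G0.
have hB : 0 < B by apply: expR_gt0.
apply: (@le_trans _ _ (B * expR (lam ^+ 2 / 2))).
  apply: ler_wpM2l; first exact: ltW.
  apply: le_trans (expR_ge1Dx _).
  have := sqr_ge0 lam; nra.
rewrite /B -expRD /=.
have -> : (n.-1)%:R * lam ^+ 2 / 2 + lam ^+ 2 / 2 = n%:R * lam ^+ 2 / 2.
  by rewrite -[in RHS](prednK hn) -natr1; ring.
by [].
Qed.

Lemma main n (f : 'S_n -> R) : Cprop f -> Concl f.
Proof.
elim: n f => [|n IH] f hf; first by apply: base.
case: (leqP n 0) => hn; first by apply: base.
exact: step.
Qed.

End Main.



Section Tail.
Variables (R : realType) (q : R).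
Hypothesis hq : 0 < q.
Notation E := (mallows_E q).

Lemma tail n (Y : 'S_n -> R) (lam s B : R) : E Y = 0 -> 0 < s -> 0 < lam ->
  E (fun x => expR (lam * Y x)) <= B ->
  mallows_P q (fun x => Y x > s) < expR (- lam * s) * B.
Proof.
move=> EY hs hl hB.
have [x0 hx0] : exists x0, Y x0 <= s.
  case: (pickP (fun x => Y x <= s)) => [x0 h|h]; first by exists x0.
  have : E (fun _ : 'S_n => s) <= E Y.
    apply: (E_le hq) => x; have := h x; rewrite /= => /negbT; rewrite -ltNge => /ltW //.
  by rewrite (E_const hq) EY; lra.
pose F x := mallows q x * expR (lam * (Y x - s)).
have Fpos x : 0 < F x by rewrite /F mulr_gt0 ?m_gt0 ?expR_gt0.
apply: (@lt_le_trans _ _ (\sum_x F x)).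
  rewrite /mallows_P (bigID (fun x => Y x > s) predT F) /=.
  have h1 : \sum_(x | Y x > s) mallows q x <= \sum_(x | Y x > s) F x.
    apply: ler_sum => x hx; rewrite /F -[X in X <= _]mulr1.
    apply: ler_wpM2l; first by apply: ltW; apply: m_gt0.
    by rewrite -expR0 ler_expR; apply: mulr_ge0; lra.
  have h2 : 0 < \sum_(x | ~~ (Y x > s)) F x.
    rewrite (bigD1 x0) /=; last by rewrite -leNgt.
    have := @sumr_ge0 R _ (index_enum _) (fun x => ~~ (s < Y x) && (x != x0)) F (fun i _ => ltW (Fpos i)).
    have := Fpos x0; lra.
  lra.
have -> : \sum_x F x = expR (- lam * s) * E (fun x => expR (lam * Y x)).
  rewrite /mallows_E mulr_sumr; apply: eq_bigr => x _.
  rewrite /F mulrCA; congr (_ * _); rewrite -expRD; congr expR; ring.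
by apply: ler_wpM2l => //; apply: ltW; apply: expR_gt0.
Qed.

End Tail.


Unset Implicit Arguments.


Theorem proposition1p8 (R : realType) (n : nat) (q : R) :
  (1 <= n)%N -> 0 < q ->
  mallows_Var q (@LISR R n) <= (n - 1)%:R /\
  (forall t : R, 0 < t ->
     mallows_P q (fun s : 'S_n =>
        `|LISR R s - mallows_E q (@LISR R n)| > t * Num.sqrt ((n - 1)%:R))
     < 2 * expR (- (t ^+ 2) / 2)).
Proof.
move=> hn hq.
have [hV hM] := main hq (@LISR_C R n).
rewrite subn1; split => // t ht.
set X := @LISR R n.
set mu := mallows_E q X.
have e2 : 0 < 2 * expR (- (t ^+ 2) / 2) by rewrite mulr_gt0 ?expR_gt0.
case: (leqP n 1) => h1.
  rewrite (_ : n.-1 = 0%N); last by lia.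
  rewrite sqrtr0 mulr0 /mallows_P big1 // => s.
  by rewrite /mu (E_triv hq h1 _ s) subrr normr0 ltxx.
set N := (n.-1)%:R : R.
have hN : 0 < N by rewrite /N ltr0n; lia.
set r := Num.sqrt N.
have hr : 0 < r by rewrite /r sqrtr_gt0.
have rr : r ^+ 2 = N by rewrite /r sqr_sqrtr // ltW.
have bX s : 1 <= X s <= n%:R.
  rewrite /X /LISR; apply/andP; split; [rewrite ler1n; apply: LIS_ge1; lia | rewrite ler_nat; exact: LIS_le].
have bmu : 1 <= mu <= n%:R.
  apply/andP; split.
    rewrite -[X in X <= _](E_const hq n); apply: (E_le hq) => s.
    by case/andP: (bX s).
  rewrite -[X in _ <= X](E_const hq n); apply: (E_le hq) => s.
  by case/andP: (bX s).
have NE : N = n%:R - 1 by rewrite /N -{2}(prednK (ltnW h1)) -natr1 addrK.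
case: (lerP r t) => htr.
  rewrite /mallows_P big1 // => s.
  rewrite ltNge => /negP [].
  apply: (@le_trans _ _ N).
    have := bX s; have := bmu; rewrite NE ler_norml => /andP [? ?] /andP [? ?].
    apply/andP; split; lra.
  rewrite -rr expr2; apply: ler_wpM2r; lra.
pose lam := t / r.
have hl : 0 < lam by rewrite divr_gt0.
have hl1 : `|lam| <= 1 by rewrite ger0_norm ?(ltW hl) // /lam ler_pdivrMr // mul1r ltW.
pose s0 := t * r.
have hs0 : 0 < s0 by rewrite mulr_gt0.
pose B := expR (N * lam ^+ 2 / 2).
have EY : mallows_E q (fun x => X x - mu) = 0.
  by rewrite E_sub (E_const hq) subrr.
have EYn : mallows_E q (fun x => - (X x - mu)) = 0.
  rewrite (E_ext q (Y := fun x => (-1) * (X x - mu))); last by move=> x; ring.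
  by rewrite E_scale EY mulr0.
have T1 := tail hq EY hs0 hl (hM lam hl1).
have T2 : mallows_P q (fun x => - (X x - mu) > s0) < expR (- lam * s0) * B.
  apply: (tail hq EYn hs0 hl).
  rewrite (E_ext q (Y := fun x => expR (- lam * (X x - mu)))); last by move=> x; congr expR; ring.
  by have := hM (- lam); rewrite normrN sqrrN; apply.
have -> : expR (- (t ^+ 2) / 2) = expR (- lam * s0) * B.
  rewrite /B -expRD; congr expR.
  rewrite /lam /s0 -rr; field; rewrite gt_eqF //.
have -> : mallows_P q (fun x => `|X x - mu| > t * r) =
  mallows_P q (fun x => X x - mu > s0) + mallows_P q (fun x => - (X x - mu) > s0).
  rewrite /mallows_P (bigID (fun x => X x - mu > s0)) /=; congr (_ + _); apply: eq_bigl => x.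
    rewrite /s0; case: (ltrP (t * r) (X x - mu)) => h; rewrite ?andbF ?andbT //= ltr_normr h //=.
  rewrite /s0 ltr_normr.
  case: (ltrP (t * r) (X x - mu)) => h /=; last by rewrite andbT.
  apply/esym/negbTE; rewrite -leNgt; move: hs0; rewrite /s0; lra.
have T1b : mallows_P q (fun x => s0 < X x - mu) < expR (- lam * s0) * B := T1.
lra.
Qed.
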